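(* Let $(T,f,(\le_h))$ be an ordered merge tree, let $\tau\colon[0,1]\to T$ be a partial in-order curve (in particular, any in-order curve) on $T$, and let $t_1\le t_2$ in $[0,1]$. Then $\tau(t)\in T_x$ for all $t\in[t_1,t_2]$, where $x=\mathrm{lca}(\tau(t_1),\tau(t_2))$.
   Context: A merge tree $(T,f)$: a finite rooted tree $T$ identified with its topological realisation (edges are copies of $[0,1]$), with a continuous $f\colon T\to\mathbb{R}\cup\{\infty\}$ strictly increasing towards the root, $f(v)=\infty$ iff $v$ is the root; lowest leaf at height $0$. $x_1\preceq x_2$ iff there is an $f$-increasing path from $x_1$ to $x_2$; $T_x$ is the subtree of descendants of $x$; $\mathrm{lca}$ the lowest common ancestor; $\mathrm{anc}_h(x)$ the unique ancestor of $x$ at height $h$; $\mathbb{L}_h=\{x:f(x)=h\}$. A layer-order is a family $(\le_h)_{h\ge0}$ of total orders on the $\mathbb{L}_h$ that is consistent ($h_1\le h_2$, $x_1\le_{h_1}x_2$ imply $\mathrm{anc}_{h_2}(x_1)\le_{h_2}\mathrm{anc}_{h_2}(x_2)$); $(T,f,(\le_h))$ is an ordered merge tree. For a curve $\sigma\colon[0,1]\to T$, the number of times $\sigma$ visits $x$ is the number of connected components of $\sigma^{-1}(x)$. $\deg(x)$ is the down-degree of $x$ ($1$ for edge-interior points, $0$ for leaves). For a vertex $v$ and a strict ancestor $x$ of $v$ on the parent edge of $v$ (possibly its upper endpoint), the planted subtree is $T_{x,v}=T_v\cup[x,v]$ with root $x$; it is $\sigma$-unvisited if all its points except possibly $x$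 are unvisited by $\sigma$; the $\sigma$-unvisited degree of $x$ is the number of $\sigma$-unvisited planted subtrees rooted at $x$. A curve $\tau\colon[0,1]\to T$ starting and ending at the root is a partial in-order curve if (1) for all $t_1,t_2$ with $f(\tau(t_1))=f(\tau(t_2))=h$ and $\tau(t_1)<_h\tau(t_2)$ we have $t_1<t_2$, and (2) each $x\in T$ is visited exactly $\deg(x)+1-\kappa$ times, where $\kappa$ is the $\tau$-unvisited degree of $x$. It is an in-order curve if moreover each $x$ is visited exactly $\deg(x)+1$ times. *)

(* Defs.v *)
From mathcomp Require Import all_boot.
From Stdlib Require Import Reals.
From Coquelicot Require Import Rbar.

Set Implicit Arguments.
Unset Strict Implicit.
Unset Printing Implicit Defensive.

(* Topological realisation of a finite rooted tree.
   Vertices: a finType V, root r, parent map par (par r = r; every vertex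
   reaches r by iterating par).  Edges: {v, par v} for v <> r, each a copy of
   [0,1] with 0 at v and 1 at par v.
   Points of the realisation are encoded canonically as pairs (v, s):
     - (v, 0)            is the vertex v,
     - (v, s), 0 < s < 1 is the interior point at parameter s on the edge
                          from v (s = 0) to par v (s = 1).       *)

Definition point (V : finType) := (V * R)%type.

Section MergeTree.
Variables (V : finType) (r : V) (par : V -> V).

Definition root_pt : point V := (r, 0%R).

Definition vanc (u w : V) : Prop := exists n, iter n par u = w.

Definition is_child (c w : V) : bool := (par c == w) && (c != w).

Definition is_leaf (v : V) : Prop := forall c, ~~ is_child c v.

Definition valid (x : point V) : Prop :=
  (x.1 = r /\ x.2 = 0%R) \/ (x.1 <> r /\ (0 <= x.2 < 1)%R).

(* x ⪯ y : y lies on the (f-increasing) path from x to the root *)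
Definition pre (x y : point V) : Prop :=
  (x.1 = y.1 /\ (x.2 <= y.2)%R) \/ (x.1 <> r /\ vanc (par x.1) y.1).

Definition in_subtree (x y : point V) : Prop := valid y /\ pre y x.

Definition is_lca (x1 x2 z : point V) : Prop :=
  valid z /\ pre x1 z /\ pre x2 z /\
  forall z', valid z' -> pre x1 z' -> pre x2 z' -> pre z z'.

(* Basic neighbourhoods of the realisation: [near x e] is the open ball of
   radius e around x for the path metric (edges of length 1) when e is small
   enough, and is always contained in that ball. *)
Definition near (x : point V) (e : R) (y : point V) : Prop :=
  ((0 < x.2)%R -> y.1 = x.1 /\ (Rabs (y.2 - x.2) < e)%R) /\
  (x.2 = 0%R -> (y.1 = x.1 /\ (y.2 < e)%R) \/ (is_child y.1 x.1 /\ (1 - e < y.2)%R)).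

Definition curve_cont (tau : R -> point V) : Prop :=
  forall t, (0 <= t <= 1)%R -> forall e, (0 < e)%R ->
  exists d, (0 < d)%R /\
    forall t', (0 <= t' <= 1)%R -> (Rabs (t' - t) < d)%R -> near (tau t) e (tau t').

Definition merge_tree (f : point V -> Rbar) : Prop :=
  par r = r /\ (forall v, vanc v r) /\
  f root_pt = p_infty /\
  (forall x, valid x -> x <> root_pt -> exists a, f x = Finite a) /\
  (forall x a, valid x -> f x = Finite a -> forall e, (0 < e)%R ->
     exists d, (0 < d)%R /\ forall y, valid y -> near x d y ->
       exists b, f y = Finite b /\ (Rabs (b - a) < e)%R) /\
  (forall M, exists d, (0 < d)%R /\ forall y, valid y -> near root_pt d y ->
       Rbar_lt (Finite M) (f y)) /\
  (forall x y, valid x -> valid y -> pre x y -> x <> y -> Rbar_lt (f x) (f y)) /\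
  (exists l, is_leaf l /\ f (l, 0%R) = Finite 0) /\
  (forall l, is_leaf l -> Rbar_le (Finite 0) (f (l, 0%R))).

Definition level (f : point V -> Rbar) (h : R) (x : point V) : Prop :=
  valid x /\ f x = Finite h.

Definition layer_order (f : point V -> Rbar) (le : R -> point V -> point V -> Prop) : Prop :=
  (forall h, (0 <= h)%R ->
     (forall x, level f h x -> le h x x) /\
     (forall x y, level f h x -> level f h y -> le h x y -> le h y x -> x = y) /\
     (forall x y z, level f h x -> level f h y -> level f h z ->
                    le h x y -> le h y z -> le h x z) /\
     (forall x y, level f h x -> level f h y -> le h x y \/ le h y x)) /\
  (forall h1 h2 x1 x2 y1 y2, (0 <= h1)%R -> (h1 <= h2)%R ->
     level f h1 x1 -> level f h1 x2 -> le h1 x1 x2 ->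
     level f h2 y1 -> pre x1 y1 -> level f h2 y2 -> pre x2 y2 ->
     le h2 y1 y2).

Definition deg (x : point V) : nat :=
  if Req_EM_T x.2 0%R then #|[set c | is_child c x.1]| else 1%nat.

Definition unvisited (sigma : R -> point V) (y : point V) : Prop :=
  forall t, (0 <= t <= 1)%R -> sigma t <> y.

(* the planted subtree T_{x,v}, with x = (v,s) if 0 < s < 1, and x = par v
   if s = 1, is sigma-unvisited: all its points other than x are unvisited. *)
Definition planted_unvisited (sigma : R -> point V) (v : V) (s : R) : Prop :=
  forall y, valid y -> ((y.1 = v /\ (y.2 < s)%R) \/ (y.1 <> v /\ vanc y.1 v)) ->
    unvisited sigma y.

Definition unvisited_degree (sigma : R -> point V) (x : point V) (k : nat) : Prop :=
  ((0 < x.2)%R ->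
     (planted_unvisited sigma x.1 x.2 /\ k = 1%nat) \/
     (~ planted_unvisited sigma x.1 x.2 /\ k = 0%nat)) /\
  (x.2 = 0%R ->
     exists S : {set V},
       (forall c, c \in S <-> (is_child c x.1 /\ planted_unvisited sigma c 1%R)) /\
       #|S| = k).

End MergeTree.

Definition same_comp (S : R -> Prop) (a b : R) : Prop :=
  forall t, (Rmin a b <= t <= Rmax a b)%R -> S t.

Definition ncomp (S : R -> Prop) (n : nat) : Prop :=
  exists p : nat -> R,
    (forall i, (i < n)%nat -> S (p i)) /\
    (forall i j, (i < j)%nat -> (j < n)%nat -> ~ same_comp S (p i) (p j)) /\
    (forall t, S t -> exists i, (i < n)%nat /\ same_comp S (p i) t).

Definition visits (V : finType) (sigma : R -> point V) (x : point V) (n : nat) : Prop :=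
  ncomp (fun t => (0 <= t <= 1)%R /\ sigma t = x) n.

Definition partial_in_order (V : finType) (r : V) (par : V -> V)
    (f : point V -> Rbar) (le : R -> point V -> point V -> Prop)
    (tau : R -> point V) : Prop :=
  (forall t, (0 <= t <= 1)%R -> valid r (tau t)) /\
  curve_cont par tau /\
  tau 0%R = root_pt r /\ tau 1%R = root_pt r /\
  (forall t1 t2 h, (0 <= t1 <= 1)%R -> (0 <= t2 <= 1)%R ->
     f (tau t1) = Finite h -> f (tau t2) = Finite h ->
     le h (tau t1) (tau t2) -> tau t1 <> tau t2 -> (t1 < t2)%R) /\
  (forall x k, valid r x -> unvisited_degree r par tau x k ->
     visits tau x (deg par x + 1 - k)%nat).

(* Main.v *)
Require Import Defs.
From mathcomp Require Import all_boot.
From Stdlib Require Import Reals.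
From Coquelicot Require Import Rbar.
From Stdlib Require Import Lra Classical ClassicalEpsilon.
From mathcomp Require Import ssrnat.

Set Implicit Arguments.
Unset Strict Implicit.
Unset Printing Implicit Defensive.

Local Open Scope R_scope.



Definition btw (a b u : R) := Rmin a b <= u <= Rmax a b.

Lemma btw_sym a b u : btw a b u -> btw b a u.
Proof. by rewrite /btw Rmin_comm Rmax_comm. Qed.

Lemma btw_le a b u : a <= u <= b -> btw a b u.
Proof. move=> [h1 h2]; rewrite /btw Rmin_left ?Rmax_right; lra. Qed.

Lemma btw_inv a b u : a <= b -> btw a b u -> a <= u <= b.
Proof. move=> h; rewrite /btw Rmin_left ?Rmax_right; lra. Qed.

Section Sep.
Variables (V : finType) (r : V) (par : V -> V).

Lemma sep_ord (tau : R -> point V) (P : point V -> Prop) (x : point V) :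
  (forall t, 0 <= t <= 1 -> valid r (tau t)) -> curve_cont par tau ->
  (forall y, valid r y -> y <> x -> exists e, 0 < e /\
      forall z, valid r z -> near par y e z -> (P z <-> P y)) ->
  forall a b, 0 <= a -> a <= b -> b <= 1 -> P (tau a) -> ~ P (tau b) ->
  exists u, a <= u <= b /\ tau u = x.
Proof.
move=> Hval Hcont Hloc a b Ha Hab Hb HPa HPb.
apply: NNPP => Hno.
have Hnx : forall u, a <= u <= b -> tau u <> x.
  by move=> u Hu Heq; apply: Hno; exists u.
pose E := fun u => a <= u <= b /\ forall v, a <= v <= u -> P (tau v).
have Ebd : bound E by exists b => u [[_ ?] _].
have Eex : exists u, E u.
  by exists a; split; [lra| move=> v Hv; have -> : v = a by lra].
have [m [Hub Hlub]] := completeness E Ebd Eex.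
have Ham : a <= m by apply: Hub; case: Eex => u Hu; split; [lra|];
  move=> v Hv; have -> : v = a by lra.
have Hmb : m <= b by apply: Hlub => u [[_ ?] _].
have [e [He Hloce]] := Hloc (tau m) (Hval m ltac:(lra)) (Hnx m ltac:(lra)).
have [d [Hd Hcd]] := Hcont m ltac:(lra) e He.
have below : forall v, a <= v < m -> exists u, E u /\ v < u.
  move=> v Hv; apply: NNPP => hn.
  have : m <= v. apply: Hlub => u Eu. apply: Rnot_lt_le => hlt. by apply: hn; exists u.
  lra.
have Pm : P (tau m).
  case: (Req_dec a m) => [<-|ham]; first exact: HPa.
  have [u [[Hu1 Hu3] Hu2]] := below (Rmax a (m - d/2)) ltac:(unfold Rmax; destruct Rle_dec; lra).
  have Hum : u <= m by apply: Hub; split.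
  have := Hcd u ltac:(unfold Rmax in *; destruct Rle_dec; lra)
    ltac:(rewrite Rabs_left1; unfold Rmax in *; destruct Rle_dec; lra).
  move/(Hloce _ (Hval u ltac:(lra))) => <-; apply: Hu3; lra.
have Em : E m.
  split; first lra.
  move=> v [Hv1 Hv2]; case: (Req_dec v m) => [->|hvm]; first exact Pm.
  have [u [[_ Hu] Hvu]] := below v ltac:(lra); apply: Hu; lra.
case: (Req_dec m b) => [hmb|hmb]; first by apply: HPb; rewrite -hmb.
pose m2 := Rmin b (m + d/2).
have : E m2.
  split; first (unfold m2, Rmin; destruct Rle_dec; lra).
  move=> v [Hv1 Hv2].
  case: (Rle_dec v m) => hvm; first by apply: Em.2; lra.
  have Hv2' : v <= b /\ v <= m + d/2 by unfold m2, Rmin in Hv2; destruct Rle_dec; lra.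
  have := Hcd v ltac:(lra) ltac:(rewrite Rabs_right; lra).
  by move/(Hloce _ (Hval v ltac:(lra))) => ->.
move/Hub; unfold m2, Rmin; destruct Rle_dec; lra.
Qed.

Lemma sep_any (tau : R -> point V) (P : point V -> Prop) (x : point V) :
  (forall t, 0 <= t <= 1 -> valid r (tau t)) -> curve_cont par tau ->
  (forall y, valid r y -> y <> x -> exists e, 0 < e /\
      forall z, valid r z -> near par y e z -> (P z <-> P y)) ->
  forall a b, 0 <= a <= 1 -> 0 <= b <= 1 -> P (tau a) -> ~ P (tau b) ->
  exists u, btw a b u /\ tau u = x.
Proof.
move=> Hval Hcont Hloc a b Ha Hb HPa HPb.
case: (Rle_dec a b) => hab.
  have [u [Hu Hux]] := sep_ord Hval Hcont Hloc Ha.1 hab Hb.2 HPa HPb.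
  by exists u; split => //; apply: btw_le.
have Hloc' : forall y, valid r y -> y <> x -> exists e, 0 < e /\
      forall z, valid r z -> near par y e z -> (~ P z <-> ~ P y).
  move=> y Hy Hyx; have [e [He H]] := Hloc y Hy Hyx; exists e; split => // z Hz Hn.
  by have := H z Hz Hn; tauto.
have [u [Hu Hux]] := sep_ord (P := fun z => ~ P z) Hval Hcont Hloc' Hb.1 (Rlt_le _ _ (Rnot_le_lt _ _ hab)) Ha.2 HPb ltac:(tauto).
by exists u; split => //; apply/btw_sym/btw_le.
Qed.
End Sep.




Definition rltb (a b : R) : bool := if Rlt_dec a b then true else false.

Lemma rltbP a b : reflect (a < b) (rltb a b).
Proof. rewrite /rltb; case: Rlt_dec => h; constructor => //. Qed.

Lemma count_lt (X : R -> Prop) (n : nat) (p : nat -> R) a b :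
  (forall t, X t -> exists i, (i < n)%N /\ same_comp X (p i) t) ->
  ~ X a -> ~ X b -> a < b -> (exists u, X u /\ btw a b u) ->
  (#|[set k : 'I_n | rltb (p k) a]| < #|[set k : 'I_n | rltb (p k) b]|)%N.
Proof.
move=> Hc Ha Hb hab [u [Xu Hu]].
have [Hu1 Hu2] := btw_inv (Rlt_le _ _ hab) Hu.
have [k [Hk Hs]] := Hc u Xu.
have Hpa : a < p k.
  apply: Rnot_le_lt => h; apply: Ha; apply: Hs; rewrite /Rmin /Rmax; destruct Rle_dec; lra.
have Hpb : p k < b.
  apply: Rnot_le_lt => h; apply: Hb; apply: Hs; rewrite /Rmin /Rmax; destruct Rle_dec; lra.
have Hk' : (k < n)%N := Hk.
apply: proper_card; apply/properP; split.
  apply/subsetP => i; rewrite !inE => /rltbP h; apply/rltbP; lra.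
exists (Ordinal Hk'); rewrite !inE /=; first by apply/rltbP.
by apply/negP => /rltbP; lra.
Qed.

Lemma count_comp (X : R -> Prop) (n : nat) (I : finType) (q : I -> R) :
  ncomp X n -> (forall i, ~ X (q i)) ->
  (forall i j, i != j -> exists u, X u /\ btw (q i) (q j) u) ->
  (#|I| <= n.+1)%N.
Proof.
move=> [p [_ [_ Hc]]] Hq Hsep.
pose N i := #|[set k : 'I_n | rltb (p k) (q i)]|.
have HN : forall i, (N i < n.+1)%N.
  by move=> i; rewrite ltnS /N; apply: leq_trans (max_card _) _; rewrite card_ord.
pose g i : 'I_n.+1 := Ordinal (HN i).
have : injective g.
  move=> i j /(congr1 val) /= hN; apply/eqP; apply: contraT => hij.
  have [u [Xu Hu]] := Hsep i j hij.
  case: (Rtotal_order (q i) (q j)) => [h|[h|h]].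
  - by move: (count_lt Hc (Hq i) (Hq j) h (ex_intro _ u (conj Xu Hu))); rewrite -/(N i) -/(N j) hN ltnn.
  - exfalso; apply: (Hq i); move: Hu; rewrite /btw -h Rmin_left ?Rmax_left; [|lra|lra].
    by move=> hu; have -> : q i = u by lra.
  - by move: (count_lt Hc (Hq j) (Hq i) h (ex_intro _ u (conj Xu (btw_sym Hu)))); rewrite -/(N i) -/(N j) hN ltnn.
move/leq_card; by rewrite card_ord.
Qed.




Section Tree.
Variables (V : finType) (r : V) (par : V -> V).
Hypothesis Hpr : par r = r.
Hypothesis Hanc : forall v, vanc par v r.

Definition In (c : V) (s : R) (y : point V) : Prop :=
  (y.1 = c /\ y.2 < s) \/ (y.1 <> c /\ vanc par y.1 c).

Lemma iter_r j : iter j par r = r.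
Proof. by elim: j => //= j ->. Qed.

Lemma iter_per v n k : iter n.+1 par v = v -> iter (k * n.+1) par v = v.
Proof.
move=> h; elim: k => [|k IH] //.
by rewrite mulSn iterD IH h.
Qed.

Lemma cyc v n : iter n.+1 par v = v -> v = r.
Proof.
move=> h; have [m hm] := Hanc v.
have := iter_per m h.
have -> : (m * n.+1 = (m * n.+1 - m) + m)%N by rewrite subnK // leq_pmulr.
by rewrite iterD hm iter_r => <-.
Qed.

Lemma vanc_parc c : par c <> c -> vanc par (par c) c -> False.
Proof.
move=> hc [n hn]; have : iter n.+1 par c = c by rewrite iterSr.
move/cyc => e; apply: hc; by rewrite e.
Qed.

Lemma vanc_uniq w c c' y : par c = w -> par c' = w -> c <> w -> c' <> w ->
  vanc par y c -> vanc par y c' -> c = c'.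
Proof.
move=> hc hc' nc nc' [n hn] [m hm].
wlog hnm : n m c c' hc hc' nc nc' hn hm / (n <= m)%N.
  move=> W; case: (leqP n m) => h; first exact: W hn hm h.
  symmetry; apply: W hm hn _ => //; exact: ltnW.
have e : iter (m - n) par c = c' by rewrite -hn -iterD subnK.
move: e; case e2: (m - n)%N => [|k] e; first by rewrite -e.
have : iter k.+1 par w = w.
  by rewrite -{1}hc -iterSr iterS e hc'.
move/cyc => wr; exfalso; apply: nc'.
by rewrite -e iterSr hc wr iter_r.
Qed.

Lemma loc_const c s x : 0 < s <= 1 -> par c <> c ->
  (s < 1 -> x = (c, s)) -> (s = 1 -> x = (par c, 0)) ->
  forall y, valid r y -> y <> x -> exists e, 0 < e /\
    forall z, valid r z -> near par y e z -> (In c s z <-> In c s y).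
Proof.
move=> Hs Hc Hx1 Hx2 [yv ys] Hy Hyx.
have Hs1 : s <> 1 -> s < 1 by move=> h; case: Hs => _ /Rle_lt_or_eq_dec; case.
have Hys : 0 <= ys < 1 by case: Hy => /= [[_ ->]|[_ h]]; lra.
case: (Req_dec ys 0) => [ys0|ys0].
-
  subst ys.
  exists (if Req_EM_T s 1 then s else Rmin s (1 - s)); split.
    case: Req_EM_T => h /=; first lra. move: (Hs1 h) => hh. apply: Rmin_glb_lt; lra.
  move=> [zv zs] Hz [_ Hn]; have := Hn (erefl _) => /= {Hn} Hn.
  have Hzs : 0 <= zs < 1 by case: Hz => /= [[_ ->]|[_ h]]; lra.
  case: Hn => [[-> hz]|[hch hz]].
  + rewrite /In /=; split; case=> [[h1 h2]|h]; try (by right); left; split => //.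
    * lra.
    * move: hz; case: Req_EM_T => h /=; [lra|move: (Rmin_l s (1 - s)); lra].
  + move: hch; rewrite /is_child => /andP [/eqP hp /eqP hne].
    rewrite /In /=; case: (classic (zv = c)) => [ezc|nzc].
    * subst zv; split.
      -- case=> [[_ h2]|[h _]] //; exfalso.
         case: (Req_EM_T s 1) => hs1.
         ++ apply: Hyx; rewrite (Hx2 hs1) -hp //.
         ++ move: hz; case: Req_EM_T => //= _; move: (Rmin_r s (1 - s)); lra.
      -- case=> [[h1 _]|[_ h2]]; first by exfalso; apply: hne; rewrite h1.
         by exfalso; apply: (vanc_parc Hc); rewrite hp.
    * split.
      -- case=> [[h1 _]|[_ [n hn]]] //.
         case: (classic (yv = c)) => hyc; first by left; split => //; lra.
         right; split => //.
         case: n hn => [|n] hn; first by exfalso.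
         by exists n; rewrite -hp -iterSr.
      -- move=> h; right; split => //.
         have [n hn] : vanc par yv c by case: h => [[-> _]|[_ h]] //; exists 0%N.
         by exists n.+1; rewrite iterSr hp.
-
  have ys_pos : 0 < ys by lra.
  exists (if Req_EM_T ys s then 1 else Rabs (ys - s)); split.
    case: Req_EM_T => h /=; [lra| apply: Rabs_pos_lt; lra].
  move=> [zv zs] Hz [Hn _]; have := Hn ys_pos => /= {Hn} [[-> hz]].
  rewrite /In /=.
  case: (classic (yv = c)) => [eyc|nyc]; last first.
    by split; case=> [[h _]|h] //; right.
  subst yv.
  have Hne : ys <> s.
    move=> e; apply: Hyx; case: (Req_dec s 1) => hs1; first lra.
    by rewrite (Hx1 ltac:(lra)) e.
  move: hz; case: Req_EM_T => //= _ hz.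
  have : (zs < s <-> ys < s).
    have [hz1 hz2] := Rabs_def2 _ _ hz.
    case: (Rlt_dec ys s) => h.
      rewrite Rabs_left in hz1 hz2; last lra. by split => _; lra.
    rewrite Rabs_right in hz1 hz2; last lra. by split => ?; lra.
  by move=> hiff; split; case=> [[_ h]|[h _]] //; left; split => //; apply/hiff.
Qed.


End Tree.




Definition bP (P : Prop) : bool := if excluded_middle_informative P then true else false.
Lemma bPP P : reflect P (bP P).
Proof. rewrite /bP; case: excluded_middle_informative => h; constructor => //. Qed.

Lemma btw01 a b u : 0 <= a <= 1 -> 0 <= b <= 1 -> btw a b u -> 0 <= u <= 1.
Proof. rewrite /btw /Rmin /Rmax; destruct Rle_dec; lra. Qed.

Lemma btw_l a b : btw a b a.
Proof. rewrite /btw /Rmin /Rmax; destruct Rle_dec; lra. Qed.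

Section Core.
Variables (V : finType) (r : V) (par : V -> V) (tau : R -> point V) (x : point V)
  (D : {set V}) (s : R).
Hypothesis Hval : forall t, 0 <= t <= 1 -> valid r (tau t).
Hypothesis Hcont : curve_cont par tau.
Hypothesis H0 : tau 0 = root_pt r.
Hypothesis H1 : tau 1 = root_pt r.
Hypothesis Hxr : x <> root_pt r.
Hypothesis Hxv : valid r x.
Hypothesis F1 : forall c, c \in D -> forall y, valid r y -> In par c s y -> Defs.pre r par y x.
Hypothesis F2 : forall y, valid r y -> Defs.pre r par y x -> y <> x -> exists c, c \in D /\ In par c s y.
Hypothesis F3 : forall c c', c \in D -> c' \in D -> c <> c' -> forall y, In par c s y -> In par c' s y -> False.
Hypothesis F4 : forall c, c \in D -> ~ In par c s x.
Hypothesis F5 : forall c, c \in D -> forall y, valid r y -> y <> x -> exists e, 0 < e /\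
    forall z, valid r z -> near par y e z -> (In par c s z <-> In par c s y).
Let K := [set c in D | bP (planted_unvisited r par tau c s)].
Hypothesis F6 : visits tau x (#|D| + 1 - #|K|).

Let X := fun u => (0 <= u <= 1) /\ tau u = x.

Lemma root_out : ~ Defs.pre r par (root_pt r) x.
Proof.
case=> /= [[h1 h2]|[h _]] //; apply: Hxr.
case: Hxv => [[h3 h4]|[h3 _]]; last by exfalso; apply: h3.
by case: x h3 h4 h1 => a b /= -> -> .
Qed.

Lemma sepOut c a b : c \in D -> 0 <= a <= 1 -> 0 <= b <= 1 ->
  In par c s (tau a) -> ~ Defs.pre r par (tau b) x -> exists u, X u /\ btw a b u.
Proof.
move=> hc ha hb hin hout.
have [u [hu hux]] := sep_any Hval Hcont (F5 hc) ha hb hin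
  (fun h => hout (F1 hc (Hval hb) h)).
by exists u; split => //; split => //; apply: btw01 hu.
Qed.

Lemma sepDir c c' a b : c \in D -> c' \in D -> c <> c' -> 0 <= a <= 1 -> 0 <= b <= 1 ->
  In par c s (tau a) -> In par c' s (tau b) -> exists u, X u /\ btw a b u.
Proof.
move=> hc hc' ne ha hb hin hin'.
have [u [hu hux]] := sep_any Hval Hcont (F5 hc) ha hb hin
  (fun h => F3 hc hc' ne h hin').
by exists u; split => //; split => //; apply: btw01 hu.
Qed.

Lemma core t1 t2 t : 0 <= t1 -> t1 <= t -> t <= t2 -> t2 <= 1 ->
  Defs.pre r par (tau t1) x -> Defs.pre r par (tau t2) x -> ~ Defs.pre r par (tau t) x -> False.
Proof.
move=> h1 h2 h3 h4 p1 p2 pt.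
have xin : Defs.pre r par x x by left; split => //; lra.
have reach : forall a, 0 <= a <= 1 -> Defs.pre r par (tau a) x ->
    exists u, X u /\ btw a t u.
  move=> a ha pa; case: (classic (tau a = x)) => [e|ne].
    by exists a; split; [split|apply: btw_l].
  have [c [hc hin]] := F2 (Hval ha) pa ne.
  have htt : 0 <= t <= 1 by lra.
  exact: sepOut hc ha htt hin pt.
have [u1 [Xu1 Bu1]] := reach t1 ltac:(lra) p1.
have [u2 [Xu2 Bu2]] := reach t2 ltac:(lra) p2.
have [hu1a hu1b] := btw_inv h2 Bu1.
have [hu2a hu2b] := btw_inv h3 (btw_sym Bu2).
pose S := {c : V | c \in D :\: K}.
have hw : forall c : S, exists w, (0 <= w <= 1) /\ In par (val c) s (tau w).
  case=> c /=; rewrite !inE => /andP [hnK hcD].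
  have npu : ~ planted_unvisited r par tau c s.
    by move=> h; move: hnK; rewrite hcD /=; case: bPP.
  apply: NNPP => hn; apply: npu => y hy hin w hw e.
  by apply: hn; exists w; split => //; rewrite e.
have [w Hw] := fin_all_exists hw.
pose I := ('I_3 + S)%type.
pose q (i : I) : R := match i with
  | inl i => match val i with 0%N => 0 | 1%N => t | _ => 1 end
  | inr c => w c end.
have hq01 : forall i, 0 <= q i <= 1.
  case=> [[[|[|[|i]]] hi]|c] /=; try lra; exact: (Hw c).1.
have notX : forall i, ~ X (q i).
  case=> [[[|[|[|i]]] hi]|c] /= [_ e].
  - by apply: root_out; rewrite -H0 e.
  - by apply: pt; rewrite e.
  - by apply: root_out; rewrite -H1 e.
  - by apply: root_out; rewrite -H1 e.
  - have := (Hw c).2; rewrite e; apply: F4.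
    by case: c {e} => c /=; rewrite !inE => /andP [].
have hD : forall c : S, val c \in D.
  by case=> c /=; rewrite !inE => /andP [].
have outq : forall a : 'I_3, ~ Defs.pre r par (tau (q (inl a))) x.
  case=> [[|[|[|i]]] hi] /= //.
  - by rewrite H0; apply: root_out.
  - by rewrite H1; apply: root_out.
have hsep : forall i j, i != j -> exists u, X u /\ btw (q i) (q j) u.
  have oo : forall a b : 'I_3, a != b -> exists u, X u /\ btw (q (inl a)) (q (inl b)) u.
    have key : forall a b : 'I_3, (val a < val b)%N -> exists u, X u /\ btw (q (inl a)) (q (inl b)) u.
      case=> [[|[|[|i]]] hi] [[|[|[|j]]] hj] //= _.
      - by exists u1; split => //; apply: btw_le; lra.
      - by exists u1; split => //; apply: btw_le; lra.
      - by exists u2; split => //; apply: btw_le; lra.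
    move=> a b hab; case: (ltngtP (val a) (val b)) => h.
    - exact: key.
    - by have [u [? ?]] := key _ _ h; exists u; split => //; apply: btw_sym.
    - by exfalso; move: hab; rewrite (val_inj h) eqxx.
  case=> [a|c] [b|c'] hne.
  - by apply: oo; move: hne; apply: contra => /eqP ->.
  - have [u [? ?]] := sepOut (hD c') (hq01 (inr c')) (hq01 (inl a)) (Hw c').2 (outq a).
    by exists u; split => //; apply: btw_sym.
  - exact: sepOut (hD c) (hq01 (inr c)) (hq01 (inl b)) (Hw c).2 (outq b).
  - have ne : val c <> val c'.
      by move=> e; move: hne; rewrite (val_inj e) eqxx.
    exact: sepDir (hD c) (hD c') ne (hq01 (inr c)) (hq01 (inr c')) (Hw c).2 (Hw c').2.
have := count_comp F6 notX hsep.
rewrite card_sum card_ord card_sig.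
have hK : K \subset D by apply/subsetP => c; rewrite inE => /andP [].
have := cardsID K D; rewrite (setIidPr hK).
have := subset_leq_card hK.
have -> : #|[pred c | c \in D :\: K]| = #|D :\: K| by [].
move=> _ <-; rewrite -addnA addKn.
by rewrite addn1 add3n ltnn.
Qed.
End Core.


Lemma In_vanc (V : finType) (par : V -> V) c s (y : point V) : In par c s y -> vanc par y.1 c.
Proof. by case=> [[-> _]|[_ h]] //; exists 0%N. Qed.

Lemma main_aux (V : finType) (r : V) (par : V -> V) (f : point V -> Rbar)
    (le : R -> point V -> point V -> Prop) (tau : R -> point V) :
  merge_tree r par f ->
  partial_in_order r par f le tau ->
  forall t1 t2 t : R, (0 <= t1)%R -> (t1 <= t)%R -> (t <= t2)%R -> (t2 <= 1)%R ->
  forall x : point V, valid r x -> x <> root_pt r ->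
  Defs.pre r par (tau t1) x -> Defs.pre r par (tau t2) x -> ~ Defs.pre r par (tau t) x -> False.
Proof.
move=> [Hpr [Hanc _]] [Hval [Hcont [H0 [H1 [_ Hvis]]]]] t1 t2 t h1 h2 h3 h4 [xv xs] Hxv Hxr p1 p2 pt.
have xvr : xv <> r.
  case: Hxv => /= [[e1 e2]|[h _]] //; by exfalso; apply: Hxr; rewrite e1 e2.
have xs01 : (0 <= xs < 1)%R by case: Hxv => /= [[e1 e2]|[_ h]].
have pxv : par xv <> xv by move=> e; apply: xvr; apply: (cyc Hpr Hanc (n:=0)).
case: (Req_dec xs 0) => [xs0|xs0].
-
  subst xs.
  pose D := [set c | is_child par c xv].
  have hD : forall c, c \in D -> par c = xv /\ c <> xv.
    by move=> c; rewrite inE /is_child => /andP [/eqP ? /eqP ?].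
  have hcr : forall c, c \in D -> c <> r.
    move=> c /hD [e1 e2] e; apply: e2; by rewrite -e1 e Hpr.
  apply: (core (D := D) (s := 1%R) Hval Hcont H0 H1 Hxr Hxv _ _ _ _ _ _ h1 h2 h3 h4 p1 p2 pt).
  + move=> c hc [yv ys] hy /=; have [e1 e2] := hD c hc; have cr := hcr c hc.
    case=> /= [[-> _]|[ne [n hn]]]; right; split => //=.
      by exists 0%N.
      by move=> e; apply: cr; rewrite -hn e iter_r.
    by exists n; rewrite -iterSr iterS hn.
  + move=> [yv ys] hy; case=> /= [[e1 e2]|[yr [n hn]]] ne.
      exfalso; apply: ne; rewrite e1; congr pair.
      case: hy => /= [[_ h]|[_ h]]; lra.
    exists (iter n par yv); split.
      rewrite inE /is_child; apply/andP; split.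
        by rewrite -iterS iterSr hn.
      apply/eqP => e; apply: pxv; by rewrite -{1}e -iterS iterSr hn.
    rewrite /In /=; case: (classic (yv = iter n par yv)) => e.
      left; split => //; case: hy => /= [[h _]|[_ h]] //; lra.
    by right; split => //; exists n.
  + move=> c c' hc hc' ne y hy hy'.
    have [e1 e2] := hD c hc; have [e1' e2'] := hD c' hc'.
    by apply: ne; apply: (vanc_uniq Hpr Hanc e1 e1' e2 e2' (In_vanc hy) (In_vanc hy')).
  + move=> c hc; have [e1 e2] := hD c hc.
    case=> /= [[e _]|[_ hv]]; first by apply: e2.
    by apply: (vanc_parc Hpr Hanc (c := c)); [rewrite e1; exact: not_eq_sym| rewrite e1].
  + move=> c hc; have [e1 e2] := hD c hc.
    apply: (loc_const Hpr Hanc); [lra| rewrite e1; exact: not_eq_sym | lra | by rewrite e1].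
  + have hud : unvisited_degree r par tau (xv, 0%R) #|[set c in D | bP (planted_unvisited r par tau c 1)]|.
      split => /= h; first lra.
      eexists; split; last reflexivity.
      move=> c; rewrite !inE; split.
        by case/andP => -> /bPP.
      by case=> -> /bPP ->.
    have := Hvis _ _ Hxv hud.
    have -> : deg par (xv, 0%R) = #|D| by rewrite /deg /=; case: Req_EM_T.
    done.
- have xsp : (0 < xs)%R by lra.
  pose D := [set xv].
  apply: (core (D := D) (s := xs) Hval Hcont H0 H1 Hxr Hxv _ _ _ _ _ _ h1 h2 h3 h4 p1 p2 pt).
  + move=> c; rewrite inE => /eqP -> [yv ys] hy; case=> /= [[-> h]|[ne [n hn]]].
      by left; split => //=; lra.
    right; split => /=.
      by move=> e; apply: xvr; rewrite -hn e iter_r.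
    case: n hn => [|n] hn; first by exfalso.
    by exists n; rewrite -iterSr.
  + move=> [yv ys] hy; case=> /= [[e1 e2]|[yr [n hn]]] ne; exists xv; split; rewrite ?inE //.
      left; split => //=.
      case: (Req_dec ys xs) => e; last lra.
      by exfalso; apply: ne; rewrite e1 e.
    rewrite /In /=; case: (classic (yv = xv)) => e.
      subst yv; exfalso; apply: (vanc_parc Hpr Hanc pxv); by exists n.
    by right; split => //; exists n.+1; rewrite iterSr.
  + by move=> c c'; rewrite !inE => /eqP -> /eqP -> [].
  + move=> c; rewrite inE => /eqP ->; case=> /= [[_ h]|[h _]] //; lra.
  + move=> c; rewrite inE => /eqP ->.
    apply: (loc_const Hpr Hanc (c:=xv) (s:=xs)); [lra|exact pxv|by []|move=> e; exfalso; lra].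
  + have hud : unvisited_degree r par tau (xv, xs) #|[set c in D | bP (planted_unvisited r par tau c xs)]|.
      split => /= h; last by exfalso; apply: xs0.
      case: (bPP (planted_unvisited r par tau xv xs)) => hp; [left|right]; split => //.
        have -> : [set c in D | bP (planted_unvisited r par tau c xs)] = [set xv].
          apply/setP => c; rewrite !inE; case: eqP => // ->; by apply/bPP.
        by rewrite cards1.
      have -> : [set c in D | bP (planted_unvisited r par tau c xs)] = set0.
        apply/setP => c; rewrite !inE; case: eqP => // -> /=; by case: bPP.
      by rewrite cards0.
    have := Hvis _ _ Hxv hud.
    have -> : deg par (xv, xs) = #|D| by rewrite /deg /= cards1; case: Req_EM_T.
    done.
Qed.

Theorem lemma11 (V : finType) (r : V) (par : V -> V) (f : point V -> Rbar)
    (le : R -> point V -> point V -> Prop) (tau : R -> point V) :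
  merge_tree r par f ->
  layer_order r par f le ->
  partial_in_order r par f le tau ->
  forall t1 t2 : R, (0 <= t1)%R -> (t1 <= t2)%R -> (t2 <= 1)%R ->
  forall x : point V, is_lca r par (tau t1) (tau t2) x ->
  forall t : R, (t1 <= t <= t2)%R -> in_subtree r par x (tau t).
Proof.
move=> Hmt _ Hpio t1 t2 h1 h2 h3 x [Hxv [p1 [p2 _]]] t [ht1 ht2].
have Hval := Hpio.1.
split; first by apply: Hval; lra.
case: (classic (x = root_pt r)) => [->|ne].
  have [_ [Hanc _]] := Hmt.
  have := Hval t ltac:(lra); case: (tau t) => yv ys /=.
  case=> /= [[-> ->]|[yr _]]; first by left; split => //=; lra.
  by right; split => //; apply: Hanc.
apply: NNPP => hn.
exact: (main_aux Hmt Hpio h1 ht1 ht2 h3 Hxv ne p1 p2 hn).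
Qed.
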